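(* Let $r,n,\delta\ge 2$ be natural numbers, let $m := \max\{\binom{rn-1}{r-1}n^2, \delta\}$ and $N := \binom{m-1}{n-1}$. Let $G$ be the graph with vertices $v_{i,j,k}$ for $i\in[n]$, $j\in[N]$, $k\in[m]$, and vertices $s_{i,X}$ for $i\in[n]$ and $X\subseteq[m]$ with $|X|=n$, whose edges are: $v_{i,j,k}v_{i',j',k'}$ whenever $i\neq i'$ and $k=k'$; and $s_{i,X}v_{i,j,k}$ whenever $k\in X$ (for all $j\in[N]$). Then $\gamma(G)=n$.
   Context: $[t]=\{1,\dots,t\}$. There are no other edges in $G$ than those listed. A set $D\subseteq V(G)$ is a total dominating set of $G$ if every vertex of $V(G)$ is adjacent to some vertex of $D$. $\gamma(G):=\min\{\chi(G[D]) : D \text{ a total dominating set of } G\}$, where $\chi$ is the chromatic number and $G[D]$ the induced subgraph. *)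

(* Defs.v *)
From mathcomp Require Import all_boot.
Set Implicit Arguments. Unset Strict Implicit. Unset Printing Implicit Defensive.

Section GraphDefs.
Variable T : finType.
Variable e : rel T.

Definition total_dominating (D : {set T}) : bool :=
  [forall x, [exists y in D, e x y]].

Definition colorable (D : {set T}) (k : nat) : bool :=
  [exists f : {ffun T -> 'I_k},
     [forall x in D, forall y in D, e x y ==> (f x != f y)]].

(* chromatic number of G[D]: least k admitting a proper k-colouring
   (for a loopless graph some k <= #|T| always works) *)
Definition chi (D : {set T}) : nat :=
  \big[minn/#|T|]_(k < #|T|.+1 | colorable D k) k.

(* gamma(G) = min { chi(G[D]) : D total dominating set of G }
   (the default #|T| is only used if no total dominating set exists) *)
Definition gamma : nat :=
  \big[minn/#|T|]_(D : {set T} | total_dominating D) chi D.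
End GraphDefs.

(* The graph G of the statement, indices are 0-based:
   [n] ~ 'I_n, [N] ~ 'I_N, [m] ~ 'I_m. *)
Definition mG (r n delta : nat) : nat :=
  maxn ('C(r * n - 1, r - 1) * n ^ 2) delta.
Definition NG (r n delta : nat) : nat := 'C(mG r n delta - 1, n - 1).

Definition Gvert (r n delta : nat) : finType :=
  (('I_n * 'I_(NG r n delta) * 'I_(mG r n delta))
   + ('I_n * {X : {set 'I_(mG r n delta)} | #|X| == n}))%type.

Definition Gadj (r n delta : nat) : rel (Gvert r n delta) :=
  fun a b =>
    match a, b with
    | inl (i, j, k), inl (i', j', k') => (i != i') && (k == k')
    | inr (i, X), inl (i', j', k') => (i == i') && (k' \in val X)
    | inl (i, j, k), inr (i', X) => (i == i') && (k \in val X)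
    | inr _, inr _ => false
    end.

(* Main.v *)
Require Import Defs.
From mathcomp Require Import all_boot.
From mathcomp Require Import zify.

Lemma card_bigcup_le (T I : finType) (A : I -> {set T}) :
  #|\bigcup_i A i| <= \sum_i #|A i|.
Proof.
apply: (big_ind2 (fun (S : {set T}) (k : nat) => #|S| <= k)).
- by rewrite cards0.
- move=> S1 k1 S2 k2 h1 h2; rewrite cardsU; lia.
- by [].
Qed.

Lemma exists_sub (T : finType) (A : {set T}) k :
  k <= #|A| -> exists B : {set T}, (B \subset A) /\ #|B| = k.
Proof.
move=> hk; exists [set x in take k (enum A)]; split.
- apply/subsetP => x; rewrite inE => /mem_take; by rewrite mem_enum.
- rewrite cardsE; have /card_uniqP -> : uniq (take k (enum A)).
    by rewrite take_uniq ?enum_uniq.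
  by rewrite size_takel // -cardE.
Qed.

Lemma bigmin_le (I : eqType) (r : seq I) (P : pred I) F d i0 :
  i0 \in r -> P i0 -> \big[minn/d]_(i <- r | P i) F i <= F i0.
Proof.
elim: r => [//|a r IH]; rewrite inE big_cons => /orP [/eqP <-|hr] hP.
- by rewrite hP geq_minl.
- case: (P a); last exact: IH.
  apply: leq_trans (geq_minr _ _) _; exact: IH.
Qed.

Lemma m_big (r n delta : nat) : 2 <= r -> 2 <= n ->
  n * (n - 1) < mG r n delta.
Proof.
move=> hr hn; rewrite /mG.
have hC : 0 < 'C(r * n - 1, r - 1) by rewrite bin_gt0; nia.
apply: (@leq_trans ('C(r * n - 1, r - 1) * n ^ 2)); last exact: leq_maxl.
apply: (@leq_trans (n ^ 2)); last by rewrite leq_pmull.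
rewrite expnS expn1; nia.
Qed.

Theorem lemma2p4 (r n delta : nat) (hr : 2 <= r) (hn : 2 <= n) (hd : 2 <= delta) :
  gamma (@Gadj r n delta) = n.
Proof.
have hm := @m_big r n delta hr hn.
set m := mG r n delta in hm *.
set N := NG r n delta.
have hN : 0 < N.
  rewrite /N /NG -/m bin_gt0.
  nia.
have hn0 : 0 < n by lia.
have hm0 : 0 < m by nia.
pose i0 : 'I_n := Ordinal hn0.
pose j0 : 'I_N := Ordinal hN.
pose k0 : 'I_m := Ordinal hm0.
set T := Gvert r n delta.
have hT : n <= #|T|.
  have := @leq_card _ T (fun i : 'I_n => (inl (i, j0, k0) : T)).
  rewrite card_ord; apply => a b /= [] ; exact.
have low : forall D : {set T}, total_dominating (@Gadj r n delta) D ->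
    forall k, colorable (@Gadj r n delta) D k -> n <= k.
  move=> D hD k.
  pose K i := [set k : 'I_m | [exists j : 'I_N, (inl (i, j, k) : T) \in D]].
  have hK : forall i, #|~: K i| < n.
    move=> i; rewrite ltnNge; apply/negP => /exists_sub [X [hX cX]].
    have cX' : #|X| == n by rewrite cX.
    pose x : T := inr (i, exist _ X cX').
    move/forallP: hD => /(_ x) /existsP [y /andP [yD]].
    case: y yD => [[[i' j'] k']|[i' X']] //= yD /andP [/eqP ii kX].
    move/subsetP: hX => /(_ _ kX); rewrite inE => /negP; apply.
    by rewrite inE; apply/existsP; exists j'; rewrite ii.
  pose U := \bigcup_i ~: K i.
  have cU : #|U| < m.
    apply: leq_ltn_trans (@card_bigcup_le _ _ (fun i => ~: K i)) _.
    apply: (@leq_ltn_trans (\sum_(i < n) (n - 1))).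
      apply: leq_sum => i _; have := hK i; lia.
    by rewrite sum_nat_const card_ord.
  have : 0 < #|~: U| by have := cardsCs U; rewrite card_ord; lia.
  case/card_gt0P => kk; rewrite inE => kU.
  have inK : forall i, kk \in K i.
    move=> i; apply: contraNT kU => hi; apply/bigcupP; exists i => //.
    by rewrite inE.
  have [jj0 _] : exists jj : 'I_N, true by exists j0.
  pose J i := odflt jj0 [pick j : 'I_N | (inl (i, j, kk) : T) \in D].
  have JD : forall i, (inl (i, J i, kk) : T) \in D.
    move=> i; rewrite /J; case: pickP => [j /= -> //|h].
    have := inK i; rewrite inE => /existsP [j hj].
    by have := h j; rewrite hj.
  case/existsP => f /forallP hf.
  have := @leq_card _ _ (fun i : 'I_n => f (inl (i, J i, kk) : T)).
  rewrite !card_ord; apply => a b /= hab.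
  case: (eqVneq a b) => // neq; exfalso; move: hab; apply/eqP.
  have := hf (inl (a, J a, kk)); rewrite JD => /forallP /(_ (inl (b, J b, kk))).
  by rewrite JD /= neq eqxx.
pose D0 : {set T} := [set x : T | if x is inl (i, j, k) then j == j0 else false].
have D0td : total_dominating (@Gadj r n delta) D0.
  apply/forallP => x; apply/existsP.
  case: x => [[[i j] k]|[i [X cX]]].
  - have hi : (i == i0) || (i == Ordinal (hn : 1 < n)) -> exists i' : 'I_n, i' != i.
      case/orP => /eqP ->; first by exists (Ordinal (hn : 1 < n)).
      by exists i0.
    have [i' hi'] : exists i' : 'I_n, i' != i.
      case: (eqVneq i i0) => [->|h]; last by exists i0; rewrite eq_sym.
      by exists (Ordinal (hn : 1 < n)).
    exists (inl (i', j0, k)); rewrite inE eqxx /= eqxx andbT.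
    by rewrite eq_sym.
  - have : 0 < #|X| by rewrite (eqP cX); lia.
    case/card_gt0P => k kX.
    by exists (inl (i, j0, k)); rewrite inE eqxx /= eqxx.
have D0col : colorable (@Gadj r n delta) D0 n.
  apply/existsP.
  exists [ffun x : T => match x with inl (i, _, _) => i | inr (i, _) => i end].
  apply/forallP => x; apply/implyP => xD; apply/forallP => y; apply/implyP => yD.
  move: xD yD; rewrite !inE.
  case: x => [[[i j] k]|//]; case: y => [[[i' j'] k']|//] _ _ /=.
  by rewrite !ffunE; apply/implyP => /andP [].
have chiD0 : chi (@Gadj r n delta) D0 <= n.
  rewrite /chi.
  have hn' : n < #|T|.+1 by lia.
  exact: (@bigmin_le _ _ _ _ _ (Ordinal hn') (mem_index_enum _)).
have chi_low : forall D : {set T}, total_dominating (@Gadj r n delta) D ->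
    n <= chi (@Gadj r n delta) D.
  move=> D hD; rewrite /chi.
  apply: (big_ind (fun x => n <= x)) => //.
  - by move=> a b ha hb; rewrite leq_min ha hb.
  - by move=> k hk; exact: low hD _ hk.
apply/eqP; rewrite eqn_leq; apply/andP; split.
- rewrite /gamma; apply: leq_trans chiD0.
  exact: (@bigmin_le _ _ _ _ _ D0 (mem_index_enum _)).
- rewrite /gamma; apply: (big_ind (fun x => n <= x)) => //;
    try (by move=> a b ha hb; rewrite leq_min ha hb);
    try (by move=> D hD; exact: chi_low).
Qed.
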